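(* The axioms I, II, III are mutually independent: for each $\mathsf X\in\{\mathrm I,\mathrm{II},\mathrm{III}\}$ there exists a pre-structural datum satisfying the two axioms other than $\mathsf X$ but failing $\mathsf X$. Moreover, the three subclauses (a), (b), (c) of Axiom III are mutually independent relative to Axioms I and II: for each of (a), (b), (c) there exists a pre-structural datum satisfying Axioms I and II and the other two subclauses of Axiom III, but failing that subclause.
   Context: For a nonempty set $X$, an algebra $\mathcal A\subseteq\mathcal P(X)$ contains $\varnothing,X$ and is closed under finite unions and complements. A finitely additive measure $\mu:\mathcal A\to[0,\infty)$ satisfies $\mu(\varnothing)=0$ and $\mu(B_1\sqcup B_2)=\mu(B_1)+\mu(B_2)$ for disjoint $B_1,B_2\in\mathcal A$. $\mathcal A\otimes\mathcal A$ denotes the algebra of subsets of $X\times X$ generated by rectangles $B_1\times B_2$ with $B_i\in\mathcal A$. For relations $H,K\subseteq X\times X$, $H\circ K=\{(x,z):\exists y\,(x,y)\in H,(y,z)\in K\}$. A pre-structural datum is a tuple $(X,\mathcal A,\mu,\mu^{\otimes2},R,I,\Pi_R,G,E_0,\eta)$ where: $X$ is a nonempty set; $\mathcal A$ is an algebra on $X$; $\mu$ is a finitely additive measure on $\mathcal A$; $\mu^{\otimes2}:\mathcal A\otimes\mathcal A\to[0,\infty)$ is finitely additive and satisfies $\mu^{\otimes2}(B_1\times B_2)=\mu(B_1)\mu(B_2)$ for all $B_1,B_2\in\mathcal A$; $R,I\in\mathcal A$ are disjoint; $\Pi_R:X\to R$ is a map; $G\subseteq X\times X$ with $G\in\mathcal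 A\otimes\mathcal A$; $E_0\in(0,\infty)$; $\eta\in[0,1]$. Axiom I: $\Pi_R\circ\Pi_R=\Pi_R$, $\Pi_R(r)=r$ for all $r\in R$, and $\Pi_R^{-1}(B)\in\mathcal A$ for every $B\in\mathcal A$ with $B\subseteq R$. Axiom II: $G$ is reflexive, symmetric, and $G\circ G=G$. Axiom III consists of: (a) conservation $\mu(R)+\mu(I)=E_0>0$; (b) projection–measure invariance $\mu(\Pi_R^{-1}(B))=\mu(B)$ for every $B\in\mathcal A$ with $B\subseteq R$; (c) coupling law: for all $B\in\mathcal A$, $\mu^{\otimes2}((B\times X)\cap G)=\mu(B)+\eta\,\mu^{\otimes2}((\Pi_R^{-1}(B)\times X)\cap G)$. *)

(* Defs.v *)
From Stdlib Require Import Reals.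
Open Scope R_scope.

Definition pset (X : Type) := X -> Prop.
Definition set0 {X : Type} : pset X := fun _ => False.
Definition setT {X : Type} : pset X := fun _ => True.
Definition setU {X : Type} (A B : pset X) : pset X := fun x => A x \/ B x.
Definition setI {X : Type} (A B : pset X) : pset X := fun x => A x /\ B x.
Definition setC {X : Type} (A : pset X) : pset X := fun x => ~ A x.
Definition subset {X : Type} (A B : pset X) : Prop := forall x, A x -> B x.
Definition disjoint {X : Type} (A B : pset X) : Prop := forall x, ~ (A x /\ B x).
Definition preimage {X Y : Type} (f : X -> Y) (B : pset Y) : pset X := fun x => B (f x).
Definition rect {X Y : Type} (B1 : pset X) (B2 : pset Y) : pset (X * Y) :=
  fun p => B1 (fst p) /\ B2 (snd p).
Definition relcomp {X : Type} (H K : pset (X * X)) : pset (X * X) :=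
  fun p => exists y, H (fst p, y) /\ K (y, snd p).

Record is_algebra {X : Type} (A : pset X -> Prop) : Prop := {
  alg_empty : A set0;
  alg_full  : A setT;
  alg_union : forall B1 B2, A B1 -> A B2 -> A (setU B1 B2);
  alg_compl : forall B, A B -> A (setC B) }.

Definition prod_algebra {X : Type} (A : pset X -> Prop) : pset (X * X) -> Prop :=
  fun S => forall C : pset (X * X) -> Prop, is_algebra C ->
    (forall B1 B2, A B1 -> A B2 -> C (rect B1 B2)) -> C S.

(* finitely additive [0,oo)-valued measure on the algebra A
   (mu is a total function; only its values on A matter) *)
Definition fa_measure {X : Type} (A : pset X -> Prop) (mu : pset X -> R) : Prop :=
  mu set0 = 0 /\
  (forall B, A B -> 0 <= mu B) /\
  (forall B1 B2, A B1 -> A B2 -> disjoint B1 B2 -> mu (setU B1 B2) = mu B1 + mu B2).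

(* pre-structural datum (X, A, mu, mu2, R, I, Pi_R, G, E0, eta);
   Pi_R : X -> R is encoded as a map X -> X whose values lie in R *)
Record predatum : Type := {
  pX : Type;
  pX_ne : inhabited pX;
  pA : pset pX -> Prop;
  pA_alg : is_algebra pA;
  pmu : pset pX -> R;
  pmu_fa : fa_measure pA pmu;
  pmu2 : pset (pX * pX) -> R;
  pmu2_fa : fa_measure (prod_algebra pA) pmu2;
  pmu2_rect : forall B1 B2, pA B1 -> pA B2 -> pmu2 (rect B1 B2) = pmu B1 * pmu B2;
  pR : pset pX;
  pI : pset pX;
  pR_A : pA pR;
  pI_A : pA pI;
  pRI_disj : disjoint pR pI;
  pPi : pX -> pX;
  pPi_R : forall x, pR (pPi x);
  pG : pset (pX * pX);
  pG_A : prod_algebra pA pG;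
  pE0 : R;
  pE0_pos : 0 < pE0;
  peta : R;
  peta_range : 0 <= peta <= 1 }.

Definition AxiomI (d : predatum) : Prop :=
  (forall x, pPi d (pPi d x) = pPi d x) /\
  (forall r, pR d r -> pPi d r = r) /\
  (forall B, pA d B -> subset B (pR d) -> pA d (preimage (pPi d) B)).

Definition AxiomII (d : predatum) : Prop :=
  (forall x, pG d (x, x)) /\
  (forall x y, pG d (x, y) -> pG d (y, x)) /\
  (forall p, relcomp (pG d) (pG d) p <-> pG d p).

Definition AxiomIIIa (d : predatum) : Prop :=
  pmu d (pR d) + pmu d (pI d) = pE0 d /\ 0 < pE0 d.

Definition AxiomIIIb (d : predatum) : Prop :=
  forall B, pA d B -> subset B (pR d) -> pmu d (preimage (pPi d) B) = pmu d B.

Definition AxiomIIIc (d : predatum) : Prop :=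
  forall B, pA d B ->
    pmu2 d (setI (rect B setT) (pG d)) =
    pmu d B + peta d * pmu2 d (setI (rect (preimage (pPi d) B) setT) (pG d)).

Definition AxiomIII (d : predatum) : Prop :=
  AxiomIIIa d /\ AxiomIIIb d /\ AxiomIIIc d.

(* Main.v *)
Require Import Defs.
From Stdlib Require Import Reals Lra Classical ClassicalEpsilon.
Open Scope R_scope.

Definition ind (P : Prop) : R := if excluded_middle_informative P then 1 else 0.
Lemma ind_T P : P -> ind P = 1.
Proof. unfold ind; destruct excluded_middle_informative; tauto. Qed.
Lemma ind_F P : ~ P -> ind P = 0.
Proof. unfold ind; destruct excluded_middle_informative; tauto. Qed.
Lemma ind_ge0 P : 0 <= ind P.
Proof. unfold ind; destruct excluded_middle_informative; lra. Qed.
Lemma ind_or P Q : ~ (P /\ Q) -> ind (P \/ Q) = ind P + ind Q.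
Proof.
  intro H; destruct (classic P); destruct (classic Q);
  repeat first [rewrite ind_T by tauto | rewrite ind_F by tauto]; try lra; tauto.
Qed.
Lemma ind_and P Q : ind (P /\ Q) = ind P * ind Q.
Proof.
  destruct (classic P); destruct (classic Q);
  repeat first [rewrite ind_T by tauto | rewrite ind_F by tauto]; lra.
Qed.

Definition Aall : pset bool -> Prop := fun _ => True.
Lemma Aall_alg : is_algebra Aall.
Proof. split; unfold Aall; auto. Qed.

Definition mkmu (a b : R) (B : pset bool) : R := a * ind (B true) + b * ind (B false).
Definition mkmu2 (a b : R) (S : pset (bool * bool)) : R :=
  a * a * ind (S (true, true)) + a * b * ind (S (true, false)) +
  b * a * ind (S (false, true)) + b * b * ind (S (false, false)).

Lemma mkmu_fa a b : 0 <= a -> 0 <= b -> fa_measure Aall (mkmu a b).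
Proof.
  intros ha hb; unfold mkmu; split; [|split].
  - unfold set0; rewrite !ind_F by tauto; lra.
  - intros B _. pose proof (ind_ge0 (B true)); pose proof (ind_ge0 (B false)); nra.
  - intros B1 B2 _ _ D; unfold setU.
    rewrite !ind_or by (apply D). lra.
Qed.

Lemma mkmu2_fa a b : 0 <= a -> 0 <= b -> fa_measure (prod_algebra Aall) (mkmu2 a b).
Proof.
  intros ha hb; unfold mkmu2; split; [|split].
  - unfold set0; rewrite !ind_F by tauto; lra.
  - intros B _.
    pose proof (ind_ge0 (B (true,true))); pose proof (ind_ge0 (B (true,false)));
    pose proof (ind_ge0 (B (false,true))); pose proof (ind_ge0 (B (false,false))).
    assert (0 <= a*a) by nra; assert (0 <= a*b) by nra; assert (0 <= b*a) by nra;
    assert (0 <= b*b) by nra; nra.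
  - intros B1 B2 _ _ D; unfold setU.
    rewrite !ind_or by (apply D). lra.
Qed.

Lemma mkmu2_rect a b B1 B2 : mkmu2 a b (rect B1 B2) = mkmu a b B1 * mkmu a b B2.
Proof. unfold mkmu2, mkmu, rect; simpl; rewrite !ind_and; ring. Qed.

Definition mk (a b : R) (ha : 0 <= a) (hb : 0 <= b) (Rs Is : pset bool)
  (hd : disjoint Rs Is) (Pi : bool -> bool) (hPi : forall x, Rs (Pi x))
  (G : pset (bool * bool)) (hG : prod_algebra Aall G) (E0 : R) (hE : 0 < E0)
  (eta : R) (heta : 0 <= eta <= 1) : predatum :=
  {| pX := bool; pX_ne := inhabits true; pA := Aall; pA_alg := Aall_alg;
     pmu := mkmu a b; pmu_fa := mkmu_fa a b ha hb;
     pmu2 := mkmu2 a b; pmu2_fa := mkmu2_fa a b ha hb;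
     pmu2_rect := fun B1 B2 _ _ => mkmu2_rect a b B1 B2;
     pR := Rs; pI := Is; pR_A := I; pI_A := I; pRI_disj := hd;
     pPi := Pi; pPi_R := hPi; pG := G; pG_A := hG;
     pE0 := E0; pE0_pos := hE; peta := eta; peta_range := heta |}.

Lemma GT_A : prod_algebra Aall setT.
Proof. intros C HC _; apply (alg_full _ HC). Qed.
Lemma G2_A : prod_algebra Aall (rect setT (fun x => x = true)).
Proof. intros C HC H; apply H; exact I. Qed.
Lemma dTF : disjoint (@setT bool) set0.
Proof. intros x [_ h]; exact h. Qed.
Lemma dtf : disjoint (fun x : bool => x = true) (fun x => x = false).
Proof. intros x [h1 h2]; congruence. Qed.
Lemma h0 : (0 <= 0 <= 1). Proof. lra. Qed.
Lemma h1 : (0 <= 1 <= 1). Proof. lra. Qed.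
Lemma hh : 0 <= 1/2. Proof. lra. Qed.
Lemma p1 : 0 <= 1. Proof. lra. Qed.
Lemma p0 : 0 <= 0. Proof. lra. Qed.
Lemma s1 : 0 < 1. Proof. lra. Qed.
Lemma s2 : 0 < 2. Proof. lra. Qed.

Ltac unf := unfold AxiomI, AxiomII, AxiomIII, AxiomIIIa, AxiomIIIb, AxiomIIIc,
  mk, mkmu, mkmu2, Aall, setI, setU, setC, rect, setT, set0, preimage, relcomp,
  subset, disjoint in *; cbn -[ind] in *.
Ltac simp_ind := repeat match goal with |- context [ind ?P] =>
  first [rewrite (ind_T P) by (unf; solve [tauto | intuition congruence])
        | rewrite (ind_F P) by (unf; solve [tauto | intuition congruence])] end.
Ltac cases B := destruct (classic (B true)); destruct (classic (B false)).

Theorem theorem6p7 :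
  (exists d : predatum, ~ AxiomI d /\ AxiomII d /\ AxiomIII d) /\
  (exists d : predatum, AxiomI d /\ ~ AxiomII d /\ AxiomIII d) /\
  (exists d : predatum, AxiomI d /\ AxiomII d /\ ~ AxiomIII d) /\
  (exists d : predatum, AxiomI d /\ AxiomII d /\
     ~ AxiomIIIa d /\ AxiomIIIb d /\ AxiomIIIc d) /\
  (exists d : predatum, AxiomI d /\ AxiomII d /\
     AxiomIIIa d /\ ~ AxiomIIIb d /\ AxiomIIIc d) /\
  (exists d : predatum, AxiomI d /\ AxiomII d /\
     AxiomIIIa d /\ AxiomIIIb d /\ ~ AxiomIIIc d).
Proof.
  split; [|split; [|split; [|split; [|split]]]].
  - exists (mk (1/2) (1/2) hh hh setT set0 dTF negb (fun _ => I) setT GT_A 1 s1 0 h0).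
    unf. split; [|split; [|split; [|split]]].
    + intros [_ [H _]]. specialize (H true I). discriminate.
    + split; [auto|split; [auto|]]. intros p; split; auto. intros _; exists true; auto.
    + split; [simp_ind; lra | lra].
    + intros B _ _. cases B; simp_ind; lra.
    + intros B _. cases B; simp_ind; lra.
  - exists (mk 1 0 p1 p0 setT set0 dTF (fun x => x) (fun _ => I)
              (rect setT (fun x => x = true)) G2_A 1 s1 0 h0).
    unf. split; [|split; [|split; [|split]]].
    + split; [auto|split; auto].
    + intros [H _]. destruct (H false) as [_ Hf]. discriminate.
    + split; [simp_ind; lra | lra].
    + intros B _ _. reflexivity.
    + intros B _. cases B; simp_ind; lra.
  - exists (mk (1/2) (1/2) hh hh setT set0 dTF (fun x => x) (fun _ => I) setT GT_A 2 s2 0 h0).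
    unf. split; [|split].
    + split; [auto|split; auto].
    + split; [auto|split; [auto|]]. intros p; split; auto. intros _; exists true; auto.
    + intros [[H _] _]. revert H. simp_ind. lra.
  - exists (mk (1/2) (1/2) hh hh setT set0 dTF (fun x => x) (fun _ => I) setT GT_A 2 s2 0 h0).
    unf. split; [|split; [|split; [|split]]].
    + split; [auto|split; auto].
    + split; [auto|split; [auto|]]. intros p; split; auto. intros _; exists true; auto.
    + intros [H _]. revert H. simp_ind. lra.
    + intros B _ _. reflexivity.
    + intros B _. cases B; simp_ind; lra.
  - exists (mk (1/2) (1/2) hh hh (fun x => x = true) (fun x => x = false) dtf
              (fun _ => true) (fun _ => eq_refl) setT GT_A 1 s1 0 h0).
    unf. split; [|split; [|split; [|split]]].
    + split; [auto|split; auto].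
    + split; [auto|split; [auto|]]. intros p; split; auto. intros _; exists true; auto.
    + split; [simp_ind; lra | lra].
    + intros H. specialize (H (fun x => x = true) I (fun x h => h)).
      revert H. cbv beta. simp_ind. lra.
    + intros B _. cases B; simp_ind; lra.
  - exists (mk 1 0 p1 p0 setT set0 dTF (fun x => x) (fun _ => I) setT GT_A 1 s1 1 h1).
    unf. split; [|split; [|split; [|split]]].
    + split; [auto|split; auto].
    + split; [auto|split; [auto|]]. intros p; split; auto. intros _; exists true; auto.
    + split; [simp_ind; lra | lra].
    + intros B _ _. reflexivity.
    + intros H. specialize (H (fun _ => True) I). revert H. cbv beta. simp_ind. lra.
Qed.
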